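(* Let $H$ be a finite abelian group and $k$ a positive integer. Suppose that for infinitely many primes $p$, every non-zero sum subset of size $k$ of $(\mathbb{Z}_p \times H) \setminus \{0_{\mathbb{Z}_p\times H}\}$ is sequenceable. Then for every positive integer $m$ all of whose prime factors are greater than $k!/2$, every non-zero sum subset of size $k$ of $(\mathbb{Z}_m \times H) \setminus \{0_{\mathbb{Z}_m\times H}\}$ is sequenceable.
   Context: For a finite subset $S$ of an abelian group with $|S| = k$, an ordering $(x_1,\dots,x_k)$ of $S$ has partial sums $(y_0,\dots,y_k)$ with $y_0 = 0$, $y_i = x_1+\cdots+x_i$. It is a sequencing if the $y_i$ are pairwise distinct, and a rotational sequencing if they are pairwise distinct except that $y_k = y_0 = 0$; $S$ is sequenceable if it has one or the other. $S$ is non-zero sum if the sum of its elements is nonzero. *)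

(* Defs.v *)
From mathcomp Require Import all_boot all_order all_algebra.
Set Implicit Arguments. Unset Strict Implicit. Unset Printing Implicit Defensive.
Import GRing.Theory.
Local Open Scope ring_scope.

(* A finite subset S of an abelian group G, given as a duplicate-free list.
   An ordering of S is a list s with perm_eq s S. *)

Definition psum (G : zmodType) (s : seq G) (i : nat) : G :=
  \sum_(x <- take i s) x.

Definition is_sequencing (G : zmodType) (s : seq G) : Prop :=
  uniq [seq psum s i | i <- iota 0 (size s).+1].

Definition is_rotational_sequencing (G : zmodType) (s : seq G) : Prop :=
  uniq [seq psum s i | i <- iota 0 (size s)] /\ psum s (size s) = 0.

Definition sequenceable (G : zmodType) (S : seq G) : Prop :=
  exists s : seq G, perm_eq s S /\
    (is_sequencing s \/ is_rotational_sequencing s).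

Definition nonzero_sum (G : zmodType) (S : seq G) : Prop :=
  \sum_(x <- S) x != 0.

Definition all_nzs_sequenceable (G : zmodType) (k : nat) : Prop :=
  forall S : seq G, uniq S -> size S = k -> 0 \notin S ->
    nonzero_sum S -> sequenceable S.

(* Z_n for n >= 1, represented as 'I_(n.-1.+1) with its canonical
   additive group structure (integers mod n). *)
Notation "''Zmod_' n" := ('I_(n.-1.+1)) (at level 8, n at level 2).

(* Main.v *)
Require Import Defs.
From mathcomp Require Import all_boot all_order all_algebra.
From mathcomp Require Import zify ring lra.
Set Implicit Arguments. Unset Strict Implicit. Unset Printing Implicit Defensive.
Import Order.TTheory GRing.Theory Num.Theory.
Local Open Scope ring_scope.

Lemma Zp1_mulrn n (a : 'I_n.+1) : (Zp1 *+ a = a)%R.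
Proof.
rewrite Zp_mulrn; apply: val_inj => /=.
case: n a => [|n] a; first by case: a => [[]].
by rewrite (modn_small (isT : 1 < n.+2)%N) mul1n modn_small.
Qed.

Lemma Zp1_mulrz_eq0 n (z : int) : ((Zp1 : 'I_n.+1) *~ z == 0) = (n.+1 %| z)%Z.
Proof.
case: z => j.
  rewrite -pmulrn Zp_mulrn; apply/eqP/idP => [/(congr1 val) /= | ].
    case: n => [|n]; first by rewrite dvdzE dvd1n.
    rewrite (modn_small (isT : 1 < n.+2)%N) mul1n => /eqP; rewrite -/(dvdn _ _).
    by rewrite dvdzE.
  rewrite dvdzE /= => /dvdnP [q ->]; apply: val_inj => /=.
  by rewrite mulnA modnMl.
rewrite NegzE mulrNz oppr_eq0 dvdzE abszN -pmulrn Zp_mulrn; apply/eqP/idP => [/(congr1 val) /= | ].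
  case: n => [|n]; first by rewrite dvd1n.
  by rewrite (modn_small (isT : 1 < n.+2)%N) mul1n => /eqP.
rewrite /= => /dvdnP [q ->]; apply: val_inj => /=.
by rewrite mulnA modnMl.
Qed.
Lemma det22 (R : comNzRingType) (Z : 'M[R]_2) : \det Z = Z 0 0 * Z 1 1 - Z 0 1 * Z 1 0.
Proof.
rewrite (expand_det_row _ 0) !big_ord_recl big_ord0 /cofactor !det_mx11 !mxE /=.
have -> : lift 0 0 = 1 :> 'I_2 by apply: val_inj.
have -> : lift (1 : 'I_2) 0 = 0 :> 'I_2 by apply: val_inj.
have -> : ord0 = 0 :> 'I_2 by apply: val_inj.
rewrite expr0 mul1r /bump /= expr1 addr0 mulN1r mulrN.
done.
Qed.

Definition mx01 r c (Z : 'M[int]_(r, c)) := forall i j, (Z i j == 0) || (Z i j == 1).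

Lemma det01 r (Z : 'M[int]_r) : mx01 Z -> 2 * `|\det Z| <= (maxn 2 r`!)%:R.
Proof.
elim: r Z => [|r IH] Z HZ; first by rewrite det_mx00.
case: r IH Z HZ => [|[|r]] IH Z HZ.
- rewrite det_mx11; have := HZ 0 0; case/orP => /eqP ->; by [].
- rewrite det22; have := HZ 0 0; have := HZ 0 1; have := HZ 1 0; have := HZ 1 1.
  by do 4! case/orP => /eqP ->.
have step : `|\det Z| <= \sum_(j < r.+3) `|\det (row' 0 (col' j Z))|.
  rewrite (expand_det_row _ 0); apply: le_trans (ler_norm_sum _ _ _) _.
  apply: ler_sum => j _; rewrite normrM /cofactor normrMsign.
  have := HZ 0 j; case/orP => /eqP ->; rewrite ?normr0 ?mul0r ?normr1 ?mul1r //.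
have minor j : 2 * `|\det (row' 0 (col' j Z))| <= (r.+2`!)%:R.
  have H : mx01 (row' 0 (col' j Z)) by move=> i l; rewrite !mxE; apply: HZ.
  have := IH _ H.
  have -> : maxn 2 r.+2`! = r.+2`! by apply/maxn_idPr; rewrite factS; have := fact_gt0 r.+1; nia.
  by [].
apply: le_trans (_ : 2 * \sum_(j < r.+3) `|\det (row' 0 (col' j Z))| <= _).
  by rewrite ler_pM2l.
rewrite mulr_sumr; apply: le_trans (ler_sum _ (fun j _ => minor j)) _.
rewrite sumr_const card_ord -mulrnA.
have -> : maxn 2 r.+3`! = r.+3`! by apply/maxn_idPr; rewrite !factS; have := fact_gt0 r; nia.
by rewrite ler_nat (factS r.+2) mulnC.
Qed.
Lemma LA N k (Az : 'M[int]_(N,k)) (c0 : 'cV[rat]_k) (tz : 'cV[int]_N) :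
  map_mx intr Az *m c0 = map_mx intr tz ->
  exists (r : nat) (Vz : 'M[int]_r) (c : 'cV[int]_k),
    (r <= k)%N /\ (forall i j, exists i' j', Vz i j = Az i' j') /\ \det Vz != 0 /\
    map_mx intr Az *m map_mx intr c = ((\det Vz)%:~R : rat) *: (map_mx intr Az *m c0).
Proof.
move=> Ht.
set A := map_mx intr Az.
set r := \rank A.
set f := maxrankfun A.
set R := rowsub f A.
have fR : row_free R := maxrowsub_free A.
have fullRT : row_full R^T.
  by rewrite /row_full mxrank_tr; exact: fR.
set g := fullrankfun fullRT.
have Uu : rowsub g R^T \in unitmx := fullrowsub_unit fullRT.
pose Vz : 'M[int]_r := \matrix_(i, j) Az (f i) (g j).
pose Pz : 'M[int]_(k, r) := \matrix_(j, l) (j == g l)%:R.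
pose tf : 'cV[int]_r := rowsub f tz.
pose cz := Pz *m (\adj Vz *m tf).
have VU : map_mx intr Vz = (rowsub g R^T)^T.
  by apply/matrixP => i j; rewrite !mxE.
have RP : R *m map_mx intr Pz = map_mx intr Vz.
  apply/matrixP => i l; rewrite !mxE (bigD1 (g l)) //= big1 ?addr0.
    by rewrite !mxE eqxx mulr1.
  by move=> j /negPf nj; rewrite !mxE nj mulr0.
have Rt : R *m c0 = map_mx intr tf.
  by rewrite /R mul_rowsub_mx Ht /tf map_mxsub.
have dV : (\det Vz)%:~R = \det (map_mx intr Vz) :> rat by rewrite det_map_mx.
have Vu : (map_mx intr Vz : 'M[rat]_r) \in unitmx by rewrite VU unitmx_tr.
exists r, Vz, cz; split; first by rewrite /r rank_leq_col.
split; first by move=> i j; exists (f i), (g j); rewrite mxE.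
split.
  by move: Vu; rewrite unitmxE unitfE -dV intr_eq0.
have Rc : R *m map_mx intr cz = ((\det Vz)%:~R : rat) *: (R *m c0).
  rewrite /cz !map_mxM mulmxA RP mulmxA map_mx_adj mul_mx_adj dV Rt.
  by rewrite mul_scalar_mx.
have /submxP [X HX] : (A <= R)%MS by rewrite (eq_maxrowsub A).
rewrite HX -!mulmxA Rc.
by rewrite -scalemxAr.
Qed.

Lemma coprime_small (D : int) (m k : nat) (r : nat) :
  (0 < m)%N -> (r <= k)%N -> (forall q, prime q -> q %| m -> k`! < 2*q)%N ->
  D != 0 -> 2 * `|D| <= (maxn 2 r`!)%:R -> coprime `|D| m.
Proof.
move=> m0 rk hq D0 hD.
have hD' : (2 * `|D| <= maxn 2 r`!)%N.
  by move: hD; rewrite -abszE; lia.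
have D0' : (0 < `|D|)%N by rewrite absz_gt0.
rewrite /coprime; apply/negPn/negP => g1.
have g0 : (0 < gcdn `|D| m)%N by rewrite gcdn_gt0 D0'.
have g2 : (1 < gcdn `|D| m)%N by lia.
have pq := pdiv_prime g2.
have q1 := prime_gt1 pq.
have qm : (pdiv (gcdn `|D| m) %| m)%N := dvdn_trans (pdiv_dvd _) (dvdn_gcdr _ _).
have qD : (pdiv (gcdn `|D| m) %| `|D|)%N := dvdn_trans (pdiv_dvd _) (dvdn_gcdl _ _).
have := hq _ pq qm; have := dvdn_leq D0' qD; have := leq_fact rk.
move: (pdiv _) q1 => q q1.
lia.
Qed.

Lemma core (k m : nat) (a : 'I_k -> int) : (0 < m)%N ->
  (forall q, prime q -> q %| m -> k`! < 2*q)%N ->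
  exists (b : 'I_k -> int) (D : int), coprime `|D| m /\
    (forall i, (m %| b i - D * a i)%Z) /\
    (forall I : {set 'I_k}, (m %| \sum_(i in I) a i)%Z -> \sum_(i in I) b i = 0).
Proof.
move=> m0 hq.
pose zs (I : {set 'I_k}) := (m %| \sum_(i in I) a i)%Z.
pose Az : 'M[int]_(#|{: {set 'I_k}}|, k) :=
  \matrix_(n, j) (zs (enum_val n) && (j \in enum_val n))%:R.
pose c0 : 'cV[rat]_k := \col_j ((a j)%:~R / m%:R).
pose tz : 'cV[int]_(#|{: {set 'I_k}}|) :=
  \col_n (if zs (enum_val n) then ((\sum_(i in enum_val n) a i) %/ m)%Z else 0).
have m0' : (m%:R : rat) != 0 by rewrite pnatr_eq0 -lt0n.
have Ht : map_mx intr Az *m c0 = map_mx intr tz.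
  apply/matrixP => n z; rewrite !mxE.
  under eq_bigr do rewrite !mxE.
  case: ifP => hz.
    rewrite (eq_bigr (fun i => (if i \in enum_val n then (a i)%:~R else 0) / (m%:R : rat))); last first.
      by move=> i _; case: (i \in _); rewrite /= ?mul1r ?mul0r.
    rewrite -mulr_suml -big_mkcond /= -rmorph_sum /=.
    apply: (mulIf m0'); rewrite mulfVK // -[X in X%:~R = _](divzK hz) intrM.
    by [].
  by rewrite big1 // => i _; rewrite /= mul0r.
have [r [Vz [cz [rk [HV [D0 Hc]]]]]] := LA Ht.
have Az01 : mx01 Az by move=> i j; rewrite mxE; case: (_ && _).
have V01 : mx01 Vz by move=> i j; have [i' [j' ->]] := HV i j; exact: Az01.
have hD := det01 V01.
exists (fun i => \det Vz * a i - m%:Z * cz i 0), (\det Vz); split.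
  exact: coprime_small m0 rk hq D0 hD.
split.
  move=> i; have -> : \det Vz * a i - m%:Z * cz i 0 - \det Vz * a i = - (m%:Z * cz i 0) by ring.
  by rewrite dvdzE abszN -dvdzE dvdz_mulr.
move=> I hI.
have := congr1 (fun M : 'cV[rat]_(#|{: {set 'I_k}}|) => M (enum_rank I) 0) Hc; rewrite /= !mxE.
rewrite (eq_bigr (fun j => if j \in I then (cz j 0)%:~R else 0 : rat)); last first.
  by move=> j _; rewrite !mxE enum_rankK /zs hI /=; case: (j \in I); rewrite /= ?mul1r ?mul0r.
rewrite [X in _ = _ * X](eq_bigr (fun j => if j \in I then (a j)%:~R / m%:R else 0 : rat)); last first.
  by move=> j _; rewrite !mxE enum_rankK /zs hI /=; case: (j \in I); rewrite /= ?mul1r ?mul0r.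
rewrite -!big_mkcond /= -mulr_suml => H.
apply: (@intr_inj rat); rewrite rmorph_sum /=.
under eq_bigr do rewrite intrB !intrM.
rewrite sumrB -!mulr_sumr H.
have -> : (m%:~R : rat) = m%:R by [].
have -> : (0%:~R : rat) = 0 by [].
by field.
Qed.
Definition similar (G G' : zmodType) (S : seq G) (f : G -> G') :=
  forall T : seq G, uniq T -> {subset T <= S} ->
    (\sum_(x <- T) x == 0) = (\sum_(x <- T) f x == 0).

Lemma uniq_map_eqpat (T : eqType) (U V : eqType) (F : T -> U) (G : T -> V) (l : seq T) :
  {in l &, forall i j, (F i == F j) = (G i == G j)} -> uniq (map F l) = uniq (map G l).
Proof.
elim: l => [|x l IH] H //=.
rewrite IH; last by move=> i j hi hj; apply: H; rewrite inE ?hi ?hj orbT.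
congr (~~ _ && _).
apply/mapP/mapP => [[y hy e]|[y hy e]]; exists y => //; apply/eqP.
  by rewrite -H ?inE ?eqxx ?hy ?orbT // e.
by rewrite H ?inE ?eqxx ?hy ?orbT // e.
Qed.

Lemma psum_diff (G : zmodType) (s : seq G) i j : (i <= j)%N ->
  psum s j = psum s i + \sum_(x <- drop i (take j s)) x.
Proof.
move=> ij; rewrite /psum -big_cat /= -{1}(cat_take_drop i (take j s)).
by rewrite take_takel.
Qed.

Lemma psum_map (G G' : zmodType) (f : G -> G') s i :
  psum (map f s) i = \sum_(x <- take i s) f x.
Proof. by rewrite /psum -map_take big_map. Qed.

Lemma transfer (G G' : zmodType) (S : seq G) (f : G -> G') :
  uniq S -> {in S &, injective f} -> similar S f ->
  sequenceable (map f S) -> sequenceable S.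
Proof.
move=> uS injf simf [s' [ps' hs']].
pose psi y := nth 0 S (index y (map f S)).
have mem' y : y \in s' -> y \in map f S.
  by move=> hy; move: (perm_mem ps' y); rewrite hy.
have fpsi y : y \in s' -> f (psi y) = y.
  move=> /mem' hy; rewrite /psi -(nth_map 0 (f 0)) ?nth_index //.
  by rewrite -(size_map f) index_mem.
have psiS y : y \in s' -> psi y \in S.
  by move=> /mem' hy; rewrite /psi mem_nth // -(size_map f) index_mem.
pose s := map psi s'.
have ms : map f s = s'.
  by rewrite /s -map_comp; apply: map_id_in => y hy /=; rewrite fpsi.
have us' : uniq s' by rewrite (perm_uniq ps') map_inj_in_uniq.
have us : uniq s by move: us'; rewrite -ms => /map_uniq.
have sS : {subset s <= S} by move=> x /mapP [y hy ->]; exact: psiS.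
exists s; split.
  apply: uniq_perm => // x; apply/idP/idP; first exact: sS.
  move=> xS; have : f x \in s' by rewrite (perm_mem ps') map_f.
  move=> hfx; have e := fpsi _ hfx.
  have -> : x = psi (f x) by apply: injf; rewrite ?psiS // e.
  exact: map_f.
have key i j : (i <= size s)%N -> (j <= size s)%N ->
    (psum s i == psum s j) = (psum s' i == psum s' j).
  wlog ij : i j / (i <= j)%N.
    move=> W hi hj; case: (leqP i j) => [ij|/ltnW ji]; first exact: W.
    by rewrite eq_sym [X in _ = X]eq_sym W.
  move=> _ _; rewrite -ms (psum_diff s ij) (psum_diff (map f s) ij).
  rewrite -map_take -map_drop big_map.
  rewrite -[X in (X == _)]addr0 -[X in _ = (X == _)]addr0 !(inj_eq (addrI _)) !(eq_sym 0).
  apply: simf; first by rewrite drop_uniq ?take_uniq.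
  by move=> x /mem_drop /mem_take; exact: sS.
have sz : size s' = size s by rewrite -ms size_map.
case: hs' => [hs|[hs hz]]; [left|right].
  move: hs; rewrite /is_sequencing sz => hs; rewrite /is_sequencing.
  rewrite (uniq_map_eqpat (G := psum s')) // => i j; rewrite !mem_iota /= !add0n !ltnS.
  by move=> hi hj; apply: key.
split.
  move: hs; rewrite sz => hs.
  rewrite (uniq_map_eqpat (G := psum s')) // => i j; rewrite !mem_iota /= !add0n.
  by move=> hi hj; apply: key; apply: ltnW.
have e1 : psum s (size s) = \sum_(x <- s) x by rewrite /psum take_size.
have e2 : psum s' (size s) = \sum_(x <- s) f x.
  by rewrite -sz /psum take_size -{1}ms big_map.
apply/eqP; rewrite e1 (simf s us sS) -e2 -sz; apply/eqP; exact: hz.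
Qed.
Lemma sum_over_idx (G : eqType) (M : zmodType) (S T : seq G) (x0 : G) (F : G -> M) (k : nat) :
  uniq S -> size S = k -> uniq T -> {subset T <= S} ->
  \sum_(x <- T) F x = \sum_(i < k | nth x0 S i \in T) F (nth x0 S i).
Proof.
move=> uS <- uT sT.
rewrite (perm_big [seq x <- S | x \in T]); last first.
  apply: uniq_perm => //; first exact: filter_uniq.
  by move=> x; rewrite mem_filter; case: (boolP (x \in T)) => //= /sT ->.
by rewrite big_filter (big_nth x0) big_mkord.
Qed.

Lemma fst_sum (A B : zmodType) (I : Type) (r : seq I) (P : pred I) (F : I -> A * B) :
  (\sum_(i <- r | P i) F i).1 = \sum_(i <- r | P i) (F i).1.
Proof. by elim/big_rec2: _ => // i x y _ /= ->. Qed.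

Lemma snd_sum (A B : zmodType) (I : Type) (r : seq I) (P : pred I) (F : I -> A * B) :
  (\sum_(i <- r | P i) F i).2 = \sum_(i <- r | P i) (F i).2.
Proof. by elim/big_rec2: _ => // i x y _ /= ->. Qed.

Lemma small_dvd (p : nat) (z Bz : int) : `|z| <= Bz -> Bz < p%:Z -> (p %| z)%Z -> z = 0.
Proof.
move=> h1 h2; rewrite dvdzE => /dvdn_leq.
have : (`|z|%N%:Z < p%:Z) by rewrite abszE; apply: le_lt_trans h2.
rewrite ltz_nat => lt hd; apply/eqP; rewrite -absz_eq0; apply/eqP.
by case: (absz z) lt hd => // n lt /(_ isT); rewrite leqNgt lt.
Qed.

Lemma peq (A B : zmodType) (u : A * B) : (u == 0) = (u.1 == 0) && (u.2 == 0).
Proof. by case: u. Qed.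

Unset Implicit Arguments.
Theorem corollary4p13 (H : finZmodType) (k : nat) (hk : (0 < k)%N) :
  (forall N : nat, exists p : nat,
      (N < p)%N /\ prime p /\ all_nzs_sequenceable ('Zmod_p * H)%type k) ->
  forall m : nat, (0 < m)%N ->
    (forall q : nat, prime q -> (q %| m)%N -> (k`! < 2 * q)%N) ->
    all_nzs_sequenceable ('Zmod_m * H)%type k.
Proof.
move=> hyp m m0 hq S uS szS n0S nzS.
pose a : 'I_k -> int := fun i => ((nth 0 S i).1 : nat)%:Z.
have [b [D [cop [hbD hb0]]]] := core a m0 hq.
pose Bz : int := \sum_i `|b i|.
have Bz0 : 0 <= Bz by apply: sumr_ge0 => i _; exact: normr_ge0.
have [p [pB [pp hp]]] := hyp (2 * absz Bz)%N.
have eB : (absz Bz)%:Z = Bz by rewrite abszE ger0_norm.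
have pB' : 2 * Bz < p%:Z by rewrite -eB; lia.
have p0 := prime_gt0 pp.
pose bb (j : nat) : int := oapp b 0 (insub j).
have bbE (i : 'I_k) : bb i = b i by rewrite /bb valK.
pose f (x : 'Zmod_m * H) : 'Zmod_p * H := (Zp1 *~ bb (index x S), x.2).
have idx (i : 'I_k) : index (nth 0 S i) S = i by rewrite index_uniq // szS.
have fnth (i : 'I_k) : f (nth 0 S i) = (Zp1 *~ b i, (nth 0 S i).2) by rewrite /f idx bbE.
have bsum (P : pred 'I_k) : `|\sum_(i | P i) b i| <= 2 * Bz.
  apply: le_trans (ler_norm_sum _ _ _) _.
  apply: (@le_trans _ _ Bz); last by lra.
  rewrite /Bz [X in _ <= X](bigID P) /= lerDl.
  by apply: sumr_ge0 => i _; exact: normr_ge0.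
have bi (i : 'I_k) : `|b i| <= Bz.
  by rewrite /Bz (bigD1 i) //= lerDl; apply: sumr_ge0 => j _; exact: normr_ge0.
have key (P : pred 'I_k) : (m %| \sum_(i | P i) a i)%Z = (p %| \sum_(i | P i) b i)%Z.
  have eqS (F : 'I_k -> int) : \sum_(i in [set i | P i]) F i = \sum_(i | P i) F i.
    by apply: eq_bigl => i; rewrite inE.
  apply/idP/idP => h.
    by have := hb0 [set i | P i]; rewrite !eqS => /(_ h) ->; exact: dvdz0.
  have z := small_dvd (bsum P) pB' h.
  have hd : (m %| \sum_(i | P i) (b i - D * a i))%Z.
    by apply: rpred_sum => i _; exact: hbD.
  move: hd; rewrite sumrB z sub0r -mulr_sumr dvdzE abszN -dvdzE.
  by rewrite Gauss_dvdzr // coprimezE coprime_sym.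
have mZ (z : int) : ((Zp1 : 'Zmod_m) *~ z == 0) = (m %| z)%Z.
  by rewrite Zp1_mulrz_eq0 prednK.
have pZ (z : int) : ((Zp1 : 'Zmod_p) *~ z == 0) = (p %| z)%Z.
  by rewrite Zp1_mulrz_eq0 prednK.
have simf : similar S f.
  move=> T uT sT; rewrite !(sum_over_idx 0 _ uS szS uT sT).
  rewrite [X in _ = (X == 0)](eq_bigr _ (fun i _ => fnth i)) !peq !fst_sum !snd_sum /=.
  congr (_ && _).
  rewrite (eq_bigr (fun i => (Zp1 : 'Zmod_m) *~ a i)); last first.
    by move=> i _; rewrite /a -pmulrn Zp1_mulrn.
  by rewrite -!mulrz_sumr mZ pZ key.
have injf : {in S &, injective f}.
  have ex x : x \in S -> exists i : 'I_k, x = nth 0 S i.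
    move=> xS; have hi : (index x S < k)%N by rewrite -szS index_mem.
    by exists (Ordinal hi); rewrite /= nth_index.
  move=> x y /ex [i ->] /ex [j ->]; rewrite !fnth => -[e1 e2].
  have dp : (p %| b i - b j)%Z by rewrite -pZ mulrzBr e1 subrr.
  have ebij : b i - b j = 0.
    apply: (small_dvd _ pB' dp); apply: le_trans (ler_normB _ _) _.
    by have := bi i; have := bi j; lra.
  have dm : (m %| a i - a j)%Z.
    have := rpredB (hbD i) (hbD j).
    have -> : b i - D * a i - (b j - D * a j) = (b i - b j) - D * (a i - a j) by ring.
    by rewrite ebij sub0r dvdzE abszN -dvdzE Gauss_dvdzr // coprimezE coprime_sym.
  move: dm e2; rewrite /a.
  case: (nth 0 S i) => [u1 u2]; case: (nth 0 S j) => [v1 v2] /= dm e2.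
  rewrite e2; congr pair; apply: val_inj => /=.
  have hu : (u1 < m)%N := leq_trans (ltn_ord u1) (eq_leq (prednK m0)).
  have hv : (v1 < m)%N := leq_trans (ltn_ord v1) (eq_leq (prednK m0)).
  move: dm; rewrite dvdzE => /dvdnP [q hq'].
  move: (nat_of_ord u1) (nat_of_ord v1) hu hv hq' => x1 y1 hx hy hq'.
have e' : `|m%:Z|%N = m by [].
rewrite e' in hq'.
case: (leqP x1 y1) => h.
  rewrite distnEr // in hq'; move: hq'; case: q => [|q'] hq'; nia.
rewrite distnEl ?(ltnW h) // in hq'; move: hq'; case: q => [|q'] hq'; nia.
apply: (transfer uS injf simf); apply: hp.
- by rewrite map_inj_in_uniq.
- by rewrite size_map.
- apply/negP => /mapP [x xS e]; move: n0S => /negP; apply.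
  have sx : {subset [:: x] <= S} by move=> y; rewrite inE => /eqP ->.
  have := simf [:: x] isT sx.
  by rewrite !big_seq1 -e eqxx => /eqP <-.
- by rewrite /nonzero_sum big_map -simf.
Qed.
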